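(* Let $\mathcal G$ be a second countable ample groupoid whose unit space $\mathcal G^{(0)}$ is Hausdorff, let $\ell$ be a field, and let $\nu:\mathcal G^{(2)}\to\mathcal U(\ell)$ be a normalized continuous $2$-cocycle. Assume that $\mathcal G$ is effective, that for every nonzero $f\in\mathcal A(\mathcal G,\nu)$ the support $\operatorname{supp}(f)=\{\xi:f(\xi)\neq0\}$ has nonempty interior, and that $\mathcal G$ is minimal. Then $\mathcal A(\mathcal G,\nu)$ is simple.
   Context: An ample groupoid is an étale topological groupoid (possibly non-Hausdorff) whose topology has a basis of compact open slices, where a slice is an open set on which the domain map $d$ and the range map are injective. $\mathcal G$ is effective if the interior of its isotropy is $\mathcal G^{(0)}$, and minimal if every orbit in $\mathcal G^{(0)}$ is dense. A continuous $2$-cocycle is a locally constant map $\nu:\mathcal G^{(2)}\to\mathcal U(\ell)$ (with $\mathcal U(\ell)$ discrete) satisfying $\nu(\xi_1,\xi_2)\nu(\xi_1\xi_2,\xi_3)=\nu(\xi_1,\xi_2\xi_3)\nu(\xi_2,\xi_3)$; it is normalized if $\nu(\xi,d(\xi))=\nu(d(\xi^{-1}),\xi)=1$ for all $\xi$. The twisted Steinberg algebra $\mathcal A(\mathcal G,\nu)$ is the $\ell$-module spanned by the functions $\mathcal G\to\ell$ which are continuous (for discrete $\ell$) and compactly supported on some Hausdorff open subset and zero outside it (equivalently, the span of characteristic functions of compact open slices), with product $(f\star_\nu g)(\xi)=\sum_{\xi=\xi_1\xi_2}\nu(\xi_1,\xi_2)f(\xi_1)g(\xi_2)$. *)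

(* Defs.v *)
From HB Require Import structures.
From mathcomp Require Import all_boot all_order all_algebra.
From mathcomp Require Import boolp classical_sets functions cardinality fsbigop.
From mathcomp Require Import topology numfun.
Set Implicit Arguments. Unset Strict Implicit. Unset Printing Implicit Defensive.
Import Order.TTheory GRing.Theory.
Local Open Scope classical_set_scope.
Local Open Scope ring_scope.

(* Structure maps of a groupoid whose elements form the type T; units are   *)
(* elements of T.  gdom = d (domain/source), gran = r (range).              *)
Record groupoid_ops (T : Type) := GroupoidOps {
  gdom : T -> T; gran : T -> T; ginv : T -> T; gmul : T -> T -> T }.

Section Groupoids.
Variable T : topologicalType.
Variable g : groupoid_ops T.

Definition composable (p : T * T) : Prop := gdom g p.1 = gran g p.2.
Definition G2 : set (T * T) := [set p | composable p].

Definition units : set T := [set x | gdom g x = x].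

Definition is_groupoid : Prop :=
  [/\ (forall x, gdom g (gdom g x) = gdom g x /\ gran g (gdom g x) = gdom g x),
      (forall x, gdom g (gran g x) = gran g x /\ gran g (gran g x) = gran g x),
      (forall x y, gdom g x = gran g y ->
          gdom g (gmul g x y) = gdom g y /\ gran g (gmul g x y) = gran g x),
      (forall x y z, gdom g x = gran g y -> gdom g y = gran g z ->
          gmul g (gmul g x y) z = gmul g x (gmul g y z)) &
      (forall x, gmul g (gran g x) x = x /\ gmul g x (gdom g x) = x) /\
      (forall x, gdom g (ginv g x) = gran g x /\ gran g (ginv g x) = gdom g x /\
          gmul g x (ginv g x) = gran g x /\ gmul g (ginv g x) x = gdom g x)].

Definition is_topological_groupoid : Prop :=
  [/\ is_groupoid,
      {within G2, continuous (fun p : T * T => gmul g p.1 p.2)},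
      continuous (ginv g), continuous (gdom g) & continuous (gran g)].

Definition rel_open (A U : set T) : Prop := exists W, open W /\ U = W `&` A.

(* d : G -> G^(0) is a local homeomorphism *)
Definition etale : Prop :=
  is_topological_groupoid /\
  forall x, exists U, [/\ open U, U x,
     (forall y z, U y -> U z -> gdom g y = gdom g z -> y = z) &
     (forall V, open V -> V `<=` U -> rel_open units (gdom g @` V))].

Definition slice (U : set T) : Prop :=
  [/\ open U,
      (forall y z, U y -> U z -> gdom g y = gdom g z -> y = z) &
      (forall y z, U y -> U z -> gran g y = gran g z -> y = z)].

Definition compact_open_slice (U : set T) : Prop := compact U /\ slice U.

Definition ample : Prop :=
  etale /\ forall x W, open W -> W x ->
    exists U, [/\ compact_open_slice U, U x & U `<=` W].

Definition units_hausdorff : Prop :=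
  forall x y, units x -> units y -> x <> y ->
    exists A B, [/\ open A, open B, A x, B y & A `&` B `&` units = set0].

Definition isotropy : set T := [set x | gdom g x = gran g x].

Definition effective : Prop := interior isotropy = units.

Definition orbit (u : T) : set T := [set gran g x | x in [set x | gdom g x = u]].

Definition minimal : Prop :=
  forall u, units u -> forall v W, units v -> open W -> W v ->
    exists w, [/\ W w, units w & orbit u w].

Variable K : fieldType.

(* normalized continuous 2-cocycle with values in the units of K (discrete) *)
Definition normalized_cocycle (nu : T * T -> K) : Prop :=
  [/\ (forall p, G2 p -> nu p != 0),
      (forall p, G2 p -> exists W, [/\ open W, W p &
           forall q, W q -> G2 q -> nu q = nu p]),
      (forall x y z, gdom g x = gran g y -> gdom g y = gran g z ->
          nu (x, y) * nu (gmul g x y, z) = nu (x, gmul g y z) * nu (y, z)) &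
      (forall x, nu (x, gdom g x) = 1 /\ nu (gdom g (ginv g x), x) = 1)].

Definition steinberg : set (T -> K) :=
  [set f | exists s : seq (K * set T),
     (forall p, p \in s -> compact_open_slice p.2) /\
     f = fun x => \sum_(p <- s) p.1 * \1_(p.2) x].

(* twisted convolution: (f * h)(xi) = sum_{xi = a b} nu(a,b) f(a) h(b),    *)
(* parametrized by a with r(a) = r(xi), b = a^-1 xi.                       *)
Definition conv (nu : T * T -> K) (f h : T -> K) : T -> K :=
  fun xi => \sum_(a \in [set a | gran g a = gran g xi])
     nu (a, gmul g (ginv g a) xi) * f a * h (gmul g (ginv g a) xi).

Definition ideal (nu : T * T -> K) (I : set (T -> K)) : Prop :=
  [/\ I `<=` steinberg, I (fun _ => 0),
      (forall f h, I f -> I h -> I (fun x => f x - h x)) &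
      (forall f h, I f -> steinberg h -> I (conv nu f h) /\ I (conv nu h f))].

Definition simple_algebra (nu : T * T -> K) : Prop :=
  forall I, ideal nu I -> I = [set fun _ => 0] \/ I = steinberg.

End Groupoids.

(* Main.v *)
Require Import Defs.
From HB Require Import structures.
From mathcomp Require Import all_boot all_order all_algebra.
From mathcomp Require Import boolp classical_sets functions cardinality fsbigop.
From mathcomp Require Import topology numfun.
Local Open Scope classical_set_scope.
Local Open Scope ring_scope.
Import GRing.Theory.
Set Implicit Arguments. Unset Strict Implicit.

Section Alg.
Variable T : topologicalType.
Variable g : groupoid_ops T.
Hypothesis G : is_groupoid g.
Local Notation d := (gdom g).
Local Notation r := (gran g).
Local Notation i := (ginv g).
Local Notation m := (gmul g).

Lemma g_dd x : d (d x) = d x. Proof. by case: G => H _ _ _ _; case: (H x). Qed.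
Lemma g_rd x : r (d x) = d x. Proof. by case: G => H _ _ _ _; case: (H x). Qed.
Lemma g_dr x : d (r x) = r x. Proof. by case: G => _ H _ _ _; case: (H x). Qed.
Lemma g_rr x : r (r x) = r x. Proof. by case: G => _ H _ _ _; case: (H x). Qed.
Lemma g_dm x y : d x = r y -> d (m x y) = d y.
Proof. by case: G => _ _ H _ _ E; case: (H x y E). Qed.
Lemma g_rm x y : d x = r y -> r (m x y) = r x.
Proof. by case: G => _ _ H _ _ E; case: (H x y E). Qed.
Lemma g_assoc x y z : d x = r y -> d y = r z -> m (m x y) z = m x (m y z).
Proof. by case: G => _ _ _ H _; apply: H. Qed.
Lemma g_mr x : m (r x) x = x. Proof. by case: G => _ _ _ _ [H _]; case: (H x). Qed.
Lemma g_md x : m x (d x) = x. Proof. by case: G => _ _ _ _ [H _]; case: (H x). Qed.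
Lemma g_di x : d (i x) = r x. Proof. by case: G => _ _ _ _ [_ H]; case: (H x). Qed.
Lemma g_ri x : r (i x) = d x. Proof. by case: G => _ _ _ _ [_ H]; case: (H x) => _ []. Qed.
Lemma g_mxi x : m x (i x) = r x. Proof. by case: G => _ _ _ _ [_ H]; case: (H x) => _ [_ []]. Qed.
Lemma g_mix x : m (i x) x = d x. Proof. by case: G => _ _ _ _ [_ H]; case: (H x) => _ [_ []]. Qed.

Lemma g_unit_r {u} : units g u -> r u = u.
Proof. by rewrite /units /= => <-; rewrite g_rd. Qed.
Lemma g_unit_i {u} : units g u -> i u = u.
Proof.
move=> U; have Ur := g_unit_r U; rewrite /units /= in U.
by rewrite -[i u]g_mr g_ri U g_mxi Ur.
Qed.
Lemma g_unit_d x : units g (d x). Proof. by rewrite /units /= g_dd. Qed.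
Lemma g_unit_rr x : units g (r x). Proof. by rewrite /units /= g_dr. Qed.

Lemma g_ii x : i (i x) = x.
Proof.
set y := i x.
have dy : d y = r x by rewrite g_di.
have E1 : x = m (m (i y) y) x by rewrite g_mix dy g_mr.
rewrite [RHS]E1 g_assoc ?g_di ?dy //.
rewrite /y g_mix.
have : d (i y) = d x by rewrite g_di /y g_ri.
by move=> <-; rewrite g_md.
Qed.

Lemma g_cancel a xi : r a = r xi -> units g (m (i a) xi) -> a = xi.
Proof.
move=> E U.
have c1 : d (i a) = r xi by rewrite g_di.
have hd : d (m (i a) xi) = d xi by rewrite g_dm.
have hr : r (m (i a) xi) = d a by rewrite g_rm // g_ri.
have ur := g_unit_r U. rewrite /units /= in U.
have da : d a = m (i a) xi by rewrite -hr ur.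
rewrite -[a]g_md da -g_assoc ?g_ri ?g_mxi ?E ?g_mr //.
Qed.


Variable K : fieldType.
Variable nu : T * T -> K.
Hypothesis Hnorm : forall x, nu (x, d x) = 1 /\ nu (d (i x), x) = 1.

Lemma fsum1 {I : choiceType} (A : set I) (F : I -> K) a0 :
  A a0 -> (forall a, A a -> a <> a0 -> F a = 0) -> \sum_(a \in A) F a = F a0.
Proof.
move=> Aa0 H; rewrite -(fsbig_widen [set a0] A F) ?fsbig_set1 //.
  by move=> x /= ->.
by move=> x [Ax /= nx]; apply: H.
Qed.

Lemma ind_in (A : set T) x : A x -> \1_A x = 1 :> K.
Proof. by move=> Ax; rewrite indicE mem_set. Qed.
Lemma ind_out (A : set T) x : ~ A x -> \1_A x = 0 :> K.
Proof. by move=> Ax; rewrite indicE memNset. Qed.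

Lemma conv_unitl (phi f : T -> K) :
  (forall a, phi a != 0 -> units g a) ->
  forall xi, conv g nu phi f xi = phi (r xi) * f xi.
Proof.
move=> Hphi xi; rewrite /conv (@fsum1 _ _ _ (r xi)) /=; last first.
- move=> a ra na; case: (eqVneq (phi a) 0) => [->|/Hphi Ua]; first by rewrite mulr0 mul0r.
  by exfalso; apply: na; rewrite -ra (g_unit_r Ua).
- by rewrite g_rr.
rewrite g_unit_i; last exact: g_unit_rr. rewrite g_mr.
by have [_ H] := Hnorm xi; rewrite g_di in H; rewrite H mul1r.
Qed.

Lemma conv_unitr (f phi : T -> K) :
  (forall a, phi a != 0 -> units g a) ->
  forall xi, conv g nu f phi xi = f xi * phi (d xi).
Proof.
move=> Hphi xi; rewrite /conv (@fsum1 _ _ _ (xi)) //=; last first.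
- move=> a ra na; case: (eqVneq (phi (m (i a) xi)) 0) => [->|/Hphi Ua]; first by rewrite mulr0.
  by exfalso; apply: na; apply: g_cancel.
by rewrite g_mix; have [H _] := Hnorm xi; rewrite H mul1r.
Qed.

Lemma conv_inv_at (B : set T) (k : K) (h : T -> K) b :
  (forall y z, B y -> B z -> d y = d z -> y = z) -> B b ->
  conv g nu (fun a => k * \1_(i @^-1` B) a) h (d b) = nu (i b, b) * k * h b.
Proof.
move=> Bd Bb; rewrite /conv (@fsum1 _ _ _ (i b)) /=; last first.
- move=> a ra na; case: (pselect (B (i a))) => Bia; last by rewrite ind_out // !mulr0 mul0r.
  exfalso; apply: na; rewrite -(Bd _ _ Bia Bb) ?g_ii //.
  by rewrite g_di ra g_rd.
- by rewrite g_ri g_rd.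
by rewrite g_ii g_md ind_in ?mulr1 // /preimage /= g_ii.
Qed.

Lemma conv_inv_out (B : set T) (k : K) (h : T -> K) xi :
  (forall y z, B y -> B z -> r y = r z -> y = z) ->
  (forall a, h a != 0 -> B a) -> ~ (exists2 b, B b & d b = xi) ->
  conv g nu (fun a => k * \1_(i @^-1` B) a) h xi = 0.
Proof.
move=> Br hB nb; rewrite /conv fsbig1 // => a ra.
case: (pselect (B (i a))) => Bia; last by rewrite ind_out // !mulr0 mul0r.
case: (eqVneq (h (m (i a) xi)) 0) => [->|/hB By]; first by rewrite mulr0.
exfalso; apply: nb; exists (i a) => //.
have c1 : d (i a) = r xi by rewrite g_di.
have E : m (i a) xi = i a by apply: Br => //; rewrite g_rm.
have ra' : r a = r xi := ra. rewrite g_di. have -> : xi = m (m a (i a)) xi by rewrite g_mxi ra' g_mr.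
by rewrite g_assoc ?E ?g_mxi ?g_ri.
Qed.

End Alg.

Section Topo.
Variable T : topologicalType.
Variable g : groupoid_ops T.
Local Notation d := (gdom g).
Local Notation r := (gran g).
Local Notation i := (ginv g).
Local Notation m := (gmul g).

Lemma units_open : effective g -> open (units g).
Proof. by rewrite /effective => <-; exact: open_interior. Qed.

Lemma d_open : etale g -> effective g -> forall V, open V -> open (d @` V).
Proof.
move=> [_ Het] Heff V oV; rewrite openE => _ [x Vx <-].
have [U [oU Ux _ Hrel]] := Het x.
have [W [oW E]] := Hrel (V `&` U) (openI oV oU) (@subIsetr _ _ _).
have oWu : open (W `&` units g) := openI oW (units_open Heff).
have Wdx : (W `&` units g) (d x) by rewrite -E; exists x.
apply: (filterS _ (open_nbhs_nbhs (conj oWu Wdx))).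
by move=> z; rewrite -E => -[y [Vy _] <-]; exists y.
Qed.

Lemma ample_groupoid : ample g -> is_groupoid g.
Proof. by case=> [[[]]]. Qed.
Lemma ample_cont_d : ample g -> continuous d.
Proof. by case=> [[[]]]. Qed.
Lemma ample_cont_r : ample g -> continuous r.
Proof. by case=> [[[]]]. Qed.
Lemma ample_cont_i : ample g -> continuous i.
Proof. by case=> [[[]]]. Qed.

End Topo.

Section Stein.
Variable T : topologicalType.
Variable g : groupoid_ops T.
Local Notation d := (gdom g).
Local Notation r := (gran g).
Local Notation i := (ginv g).
Local Notation m := (gmul g).
Variable K : fieldType.

Lemma cos_inv (B : set T) : ample g -> compact_open_slice g B ->
  compact_open_slice g (i @^-1` B).
Proof.
move=> Ha [cB [oB Bd Br]]; have G := ample_groupoid Ha.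
have E : i @^-1` B = i @` B.
  apply/seteqP; split=> x.
    by move=> Bx; exists (i x) => //; rewrite g_ii.
  by case=> y By <-; rewrite /preimage /= g_ii.
split; first by rewrite E; apply: continuous_compact => //;
  apply: continuous_subspaceT; exact: ample_cont_i.
split.
- by move: (ample_cont_i Ha) => /continuousP; apply.
- move=> y z By Bz e; rewrite -(g_ii G y) -(g_ii G z); congr (i _).
  by apply: Br => //; rewrite !g_ri.
- move=> y z By Bz e; rewrite -(g_ii G y) -(g_ii G z); congr (i _).
  by apply: Bd => //; rewrite !g_di.
Qed.

Lemma stein_scal (B : set T) (k : K) : compact_open_slice g B ->
  steinberg g (fun x => k * \1_B x).
Proof.
move=> cB; exists [:: (k, B)]; split.
  by move=> p; rewrite inE => /eqP ->.
by apply: funext => x; rewrite big_cons big_nil addr0.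
Qed.

End Stein.

Section Loc.
Variable T : topologicalType.
Variable g : groupoid_ops T.
Local Notation d := (gdom g).
Local Notation r := (gran g).
Local Notation i := (ginv g).
Local Notation m := (gmul g).

Definition locP (U W : set T) :=
  (forall xi, W (r xi) -> W (d xi) -> (U xi <-> units g xi)) \/
  (forall xi, W (r xi) -> W (d xi) -> ~ U xi).

Lemma locP_sub U W W' : W' `<=` W -> locP U W -> locP U W'.
Proof.
move=> sW [H|H]; [left|right] => xi a b; apply: H; exact: sW.
Qed.

Lemma localize (U W : set T) : ample g -> effective g -> units_hausdorff g ->
  open U -> (forall y z, U y -> U z -> d y = d z -> y = z) ->
  open W -> W `<=` units g -> W !=set0 ->
  exists W', [/\ open W', W' !=set0, W' `<=` W & locP U W'].
Proof.
move=> Ha Heff Hh oU Ud oW Wu W0.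
have G := ample_groupoid Ha.
have cd := ample_cont_d Ha; have cr := ample_cont_r Ha.
have pre (f : T -> T) A : continuous f -> open A -> open (f @^-1` A).
  by move=> /continuousP; apply.
set O := U `&` d @^-1` W `&` r @^-1` W.
have oO : open O by apply: openI; [apply: openI => //|]; apply: pre.
case: (pselect (exists z, O z /\ d z <> r z)) => [[z [Oz nz]]|nex].
  have [A [B1 [oA oB1 Az B1z AB]]] :=
    Hh (r z) (d z) (g_unit_rr G z) (g_unit_d G z) (nesym nz).
  set O2 := O `&` r @^-1` A.
  have oO2 : open O2 by apply: openI => //; apply: pre.
  exists (W `&` B1 `&` d @` O2); split.
  - by apply: openI; [apply: openI|apply: (d_open Ha.1 Heff)].
  - by exists (d z); split; [split|exists z] => //; case: Oz => -[].
  - by move=> x [[]].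
  right=> xi [[Wr Br] _] [_ [y [[[Uy _] _] Ay] e]] Uxi.
  have exy : xi = y by apply: Ud.
  have : (A `&` B1 `&` units g) (r xi) by split; [split|apply: Wu] => //; rewrite exy.
  by rewrite AB.
have Oiso : O `<=` isotropy g.
  move=> z Oz; apply: contrapT => nz; apply: nex; by exists z.
have Ou : O `<=` units g.
  by rewrite /effective in Heff; rewrite -Heff -open_subsetE.
case: (pselect (O !=set0)) => [O0|O0].
  exists O; split => //.
    by move=> z Oz; have := Ou _ Oz; rewrite /units /= => <-; case: Oz => -[].
  left=> xi Or Od; split.
    move=> Uxi; apply: Ou; split; [split|] => //.
      by case: Od => -[_ H _]; rewrite /preimage /= (g_dd G) in H.
    by case: Or => -[_ H _]; rewrite /preimage /= (g_dr G) in H.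
  by move=> uxi; rewrite /units /= in uxi; rewrite uxi in Od; case: Od => -[].
exists W; split => //.
right=> xi Wr Wd Uxi; apply: O0; exists xi; split; [split|] => //.
Qed.


Variable K : fieldType.

Lemma localize_list (s : seq (K * set T)) (W : set T) :
  ample g -> effective g -> units_hausdorff g ->
  (forall p, p \in s -> compact_open_slice g p.2) ->
  open W -> W `<=` units g -> W !=set0 ->
  exists W', [/\ open W', W' !=set0, W' `<=` W &
    forall p, p \in s -> locP p.2 W'].
Proof.
move=> Ha Heff Hh; elim: s => [|p s IH] Hs oW Wu W0.
  by exists W; split => // p; rewrite in_nil.
have [W1 [oW1 W10 W1W H1]] := IH (fun q qs => Hs q (introT orP (or_intror qs))) oW Wu W0.
have [_ [oU Ud _]] := Hs p (mem_head p s).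
have [W2 [oW2 W20 W2W1 H2]] :=
  localize Ha Heff Hh oU Ud oW1 (subset_trans W1W Wu) W10.
exists W2; split => //; first exact: subset_trans W2W1 W1W.
move=> q; rewrite in_cons => /orP [/eqP ->//|qs].
exact: locP_sub W2W1 (H1 q qs).
Qed.

Lemma stein_const_unit (s : seq (K * set T)) W u xi : is_groupoid g ->
  (forall p, p \in s -> locP p.2 W) -> W `<=` units g -> W u ->
  W (r xi) -> W (d xi) -> units g xi ->
  \sum_(p <- s) p.1 * \1_(p.2) xi = \sum_(p <- s) p.1 * \1_(p.2) u.
Proof.
move=> G Hs Wu Wuu Wr Wd uxi.
have uu := Wu _ Wuu.
have Wru : W (r u) by rewrite (g_unit_r G uu).
have Wdu : W (d u) by rewrite uu.
rewrite big_seq [RHS]big_seq; apply: eq_bigr => p ps.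
have [H|H] := Hs p ps.
  by rewrite !ind_in //; [apply/(H u Wru Wdu)|apply/(H xi Wr Wd)].
by rewrite !ind_out //; [apply: H|apply: H].
Qed.

Lemma stein_const_nonunit (s : seq (K * set T)) W xi :
  (forall p, p \in s -> locP p.2 W) ->
  W (r xi) -> W (d xi) -> ~ units g xi ->
  \sum_(p <- s) p.1 * \1_(p.2) xi = 0.
Proof.
move=> Hs Wr Wd nu; rewrite big_seq big1 // => p ps.
have [H|H] := Hs p ps; last by rewrite ind_out ?mulr0 //; apply: H.
by rewrite ind_out ?mulr0 // => /(H xi Wr Wd).
Qed.

End Loc.

Definition pT {T : topologicalType} (x : T) : Type := T.
HB.instance Definition _ (T : topologicalType) (x : T) := Choice.copy (pT x) T.
HB.instance Definition _ (T : topologicalType) (x : T) := isPointed.Build (pT x) x.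
HB.instance Definition _ (T : topologicalType) (x : T) := Topological.copy (pT x) T.
Lemma compact_coverT (T : topologicalType) (x : T) (A : set T) :
  compact A -> @cover_compact (pT x) A.
Proof. by move=> cA; rewrite -compact_cover. Qed.

Section Main.
Variable T : topologicalType.
Variable g : groupoid_ops T.
Local Notation d := (gdom g).
Local Notation r := (gran g).
Local Notation i := (ginv g).
Local Notation m := (gmul g).
Variable K : fieldType.
Variable nu : T * T -> K.
Variable I : set (T -> K).
Hypothesis Ha : ample g.
Hypothesis Heff : effective g.
Hypothesis Hh : units_hausdorff g.
Hypothesis Hnu : normalized_cocycle g nu.
Hypothesis Hmin : minimal g.
Hypothesis HI : ideal g nu I.

Let G := ample_groupoid Ha.
Let Hnorm : forall x, nu (x, d x) = 1 /\ nu (d (i x), x) = 1.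
Proof. by case: Hnu. Qed.

Lemma I0 : I (fun _ => 0). Proof. by case: HI. Qed.
Lemma Isub f h : I f -> I h -> I (fun x => f x - h x).
Proof. by case: HI => _ _ H _; apply: H. Qed.
Lemma Iconv_r f h : I f -> steinberg g h -> I (conv g nu f h).
Proof. by case: HI => _ _ _ H If Sh; case: (H f h If Sh). Qed.
Lemma Iconv_l f h : I f -> steinberg g h -> I (conv g nu h f).
Proof. by case: HI => _ _ _ H If Sh; case: (H f h If Sh). Qed.
Lemma Istein f : I f -> steinberg g f.
Proof. by case: HI => H _ _ _; apply: H. Qed.

Lemma stein_ind (B : set T) : compact_open_slice g B -> steinberg g (\1_B : T -> K).
Proof.
move=> cB; have := stein_scal (1 : K) cB.
by have -> : (fun x => 1 * \1_B x) = (\1_B : T -> K) by apply: funext => x; rewrite mul1r.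
Qed.

Lemma ind_unit (W : set T) (k : K) : W `<=` units g ->
  forall a, k * \1_W a != 0 -> units g a.
Proof.
move=> Wu a; case: (pselect (W a)) => Wa; first by move=> _; apply: Wu.
by rewrite ind_out // mulr0 eqxx.
Qed.

Lemma ind_unit1 (W : set T) : W `<=` units g ->
  forall a, (\1_W a : K) != 0 -> units g a.
Proof.
move=> Wu a; case: (pselect (W a)) => Wa; first by move=> _; apply: Wu.
by rewrite ind_out // eqxx.
Qed.

Definition Jset (W : set T) := W `<=` units g /\ I (\1_W : T -> K).

Lemma J0 : Jset set0.
Proof. by split => //; rewrite indic0; exact: I0. Qed.

Lemma JU W1 W2 : Jset W1 -> Jset W2 -> Jset (W1 `|` W2).
Proof.
move=> [W1u I1] [W2u I2]; split; first by move=> x [/W1u|/W2u].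
have Ic := Iconv_r I1 (Istein I2).
have := Isub I1 (Isub Ic I2).
suff -> : (fun x => \1_W1 x - (conv g nu \1_W1 \1_W2 x - \1_W2 x)) =
  (\1_(W1 `|` W2) : T -> K) by [].
apply: funext => x; rewrite conv_unitl //; last exact: ind_unit1.
case: (pselect (W2 x)) => w2.
  rewrite (g_unit_r G (W2u _ w2)) (ind_in _ w2) mulr1 [RHS]ind_in; last by right.
  by rewrite opprB addrC subrK.
rewrite (ind_out _ w2) mulr0 subrr subr0.
case: (pselect (W1 x)) => w1.
  by rewrite !ind_in //; left.
by rewrite !ind_out // => -[].
Qed.


Lemma Jtrans W : Jset W -> open W -> W !=set0 ->
  forall v, units g v -> exists D, [/\ open D, D v & Jset D].
Proof.
move=> [Wu IW] oW [w0 Ww0] v uv.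
have [w [Ww uw [x /= dxv rxw]]] := Hmin uv (Wu _ Ww0) oW Ww0.
have [Hnz Hloc _ _] := Hnu.
have G2p : G2 g (i x, x) by rewrite /G2 /composable /= (g_di G).
have [WN [oWN WNp HWN]] := Hloc _ G2p.
have ci := ample_cont_i Ha; have cr := ample_cont_r Ha.
have cphi : continuous (fun b => (i b, b)).
  by move=> b; apply: cvg_pair; [exact: ci|exact: cvg_id].
set N := (fun b => (i b, b)) @^-1` WN `&` r @^-1` W.
have oN : open N.
  apply: openI; first by move: cphi => /continuousP; apply.
  by move: cr => /continuousP; apply.
have Nx : N x by split => //=; rewrite rxw.
have [B [cB Bx BN]] := Ha.2 x N oN Nx.
have [_ [oB Bd Br]] := cB.
have eh : conv g nu \1_W \1_B = (\1_B : T -> K).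
  apply: funext => y; rewrite conv_unitl //; last exact: ind_unit1.
  case: (pselect (B y)) => By; last by rewrite (ind_out _ By) mulr0.
  by rewrite !ind_in ?mulr1 //; have [] := BN _ By.
have IB : I (\1_B : T -> K) by rewrite -eh; apply: Iconv_r => //; exact: stein_ind.
set k := (nu (i x, x))^-1.
have IG := Iconv_l IB (stein_scal k (cos_inv Ha cB)).
exists (d @` B); split.
- exact: (d_open Ha.1 Heff).
- by exists x.
split; first by move=> _ [b _ <-]; exact: g_unit_d.
suff <- : conv g nu (fun a => k * \1_(i @^-1` B) a) \1_B = (\1_(d @` B) : T -> K) by [].
apply: funext => y.
case: (pselect (exists2 b, B b & d b = y)) => [[b Bb <-]|nb].
  rewrite conv_inv_at // (ind_in _ Bb) mulr1 [RHS]ind_in; last by exists b.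
  have G2b : G2 g (i b, b) by rewrite /G2 /composable /= (g_di G).
  have [WNb _] := BN _ Bb.
  by rewrite (HWN _ WNb G2b) /k mulfV //; apply: Hnz.
rewrite conv_inv_out //.
- by rewrite ind_out.
move=> a; case: (pselect (B a)) => // Ba; by rewrite ind_out // eqxx.
Qed.

Lemma Jbig (F : T -> set T) (s : seq T) :
  (forall y, y \in s -> Jset (F y)) -> Jset (\bigcup_(y in [set` s]) F y).
Proof.
elim: s => [|a s IH] Hs.
  suff -> : \bigcup_(y in [set` [::]]) F y = set0 by exact: J0.
  by apply/seteqP; split => // z [y].
suff -> : \bigcup_(y in [set` (a :: s)]) F y = F a `|` \bigcup_(y in [set` s]) F y.
  apply: JU; first by apply: Hs; rewrite mem_head.
  by apply: IH => y ys; apply: Hs; rewrite in_cons ys orbT.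
apply/seteqP; split => z.
  by case=> y /=; rewrite in_cons => /orP[/eqP ->|ys] Fz; [left|right; exists y].
case=> [Fz|[y ys Fz]]; first by exists a => //=; rewrite mem_head.
by exists y => //=; rewrite in_cons ys orbT.
Qed.

Lemma Jfinal W0 : Jset W0 -> open W0 -> W0 !=set0 ->
  forall (B : set T) (k : K), compact_open_slice g B -> I (fun x => k * \1_B x).
Proof.
move=> JW0 oW0 [x0 Wx0] B k cB.
have /choice [Df HDf] : forall y, exists D : set T,
    units g y -> [/\ open D, D y & Jset D].
  move=> y; case: (pselect (units g y)) => uy.
    by have [D HD] := Jtrans JW0 oW0 (ex_intro _ x0 Wx0) uy; exists D.
  by exists set0.
have cC : compact (r @` B).
  apply: continuous_compact; last by case: cB.
  apply: continuous_subspaceT; exact: ample_cont_r.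
have uC : forall y, (r @` B) y -> units g y by move=> _ [b _ <-]; exact: g_unit_rr.
have oD : forall y, (r @` B) y -> open (Df y) by move=> y Cy; case: (HDf y (uC y Cy)).
have DD : forall y, (r @` B) y -> Df y y by move=> y Cy; case: (HDf y (uC y Cy)).
have [F FC CF] := @compact_coverT _ x0 _ cC T (r @` B) Df
  oD (fun y Cy => ex_intro2 _ _ y Cy (DD y Cy)).
have JF : Jset (\bigcup_(y in [set` (finmap.enum_fset F)]) Df y).
  apply: Jbig => y yF; have := FC y yF; rewrite inE => Cy.
  by have [] := HDf y (uC y Cy).
have [JFu JFI] := JF.
have := Iconv_r JFI (stein_scal k cB).
suff -> : conv g nu (\1_(\bigcup_(y in [set` (finmap.enum_fset F)]) Df y))
   (fun x => k * \1_B x) = (fun x => k * \1_B x) by [].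
apply: funext => x; rewrite conv_unitl //; last exact: ind_unit1.
case: (pselect (B x)) => Bx; last by rewrite !(ind_out _ Bx) !mulr0.
rewrite ind_in ?mul1r //.
have /CF [y yF Dy] : (r @` B) (r x) by exists x.
by exists y.
Qed.

Lemma stepA (Hint : forall f : T -> K, steinberg g f -> (exists x, f x != 0) ->
     interior [set x | f x != 0] !=set0) f :
  I f -> (exists x, f x != 0) -> exists W0, [/\ Jset W0, open W0 & W0 !=set0].
Proof.
move=> If fnz.
have [x0 x0S] := Hint f (Istein If) fnz.
have [B [cB Bx0 BS]] := Ha.2 x0 _ (@open_interior _ _) x0S.
have [_ [oB Bd Br]] := cB.
set f1 := conv g nu (fun a => 1 * \1_(ginv g @^-1` B) a) f.
have If1 : I f1 by apply: Iconv_l => //; apply: stein_scal; exact: cos_inv.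
set W0 := d @` B.
have oW0 : open W0 := d_open Ha.1 Heff oB.
have W0u : W0 `<=` units g by move=> _ [b _ <-]; exact: g_unit_d.
have f1nz : forall y, W0 y -> f1 y != 0.
  move=> _ [b Bb <-]; rewrite /f1 conv_inv_at // mulr1.
  have [Hnz _ _ _] := Hnu.
  apply: mulf_neq0; first by apply: Hnz; rewrite /G2 /composable /= (g_di G).
  by have := interior_subset (BS _ Bb).
have [s [Hs ef1]] := Istein If1.
have [W' [oW' [u W'u] W'W0 HW']] :=
  localize_list Ha Heff Hh Hs oW0 W0u (ex_intro _ (d x0) (ex_intro2 _ _ x0 Bx0 erefl)).
have W'un := subset_trans W'W0 W0u.
have c0 : f1 u != 0 by apply: f1nz; apply: W'W0.
have [V [cV Vu VW']] := Ha.2 u W' oW' W'u.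
have Vun := subset_trans VW' W'un.
have [_ [oV _ _]] := cV.
set c := f1 u.
have I1 := Iconv_r If1 (stein_ind cV).
have I2 := Iconv_l I1 (stein_ind cV).
have I3 := Iconv_l I2 (stein_scal c^-1 cV).
exists V; split => //; last by exists u.
split => //.
suff <- : conv g nu (fun a => c^-1 * \1_V a)
   (conv g nu \1_V (conv g nu f1 \1_V)) = (\1_V : T -> K) by [].
apply: funext => xi.
rewrite conv_unitl //; last exact: ind_unit.
rewrite conv_unitl //; last exact: ind_unit1.
rewrite conv_unitr //; last exact: ind_unit1.
case: (pselect (V (r xi) /\ V (d xi))) => [[Vr Vd]|nV]; last first.
  have nVx : ~ V xi.
    move=> Vx; apply: nV; have ux := Vun _ Vx.
    by rewrite (g_unit_r G ux) ux.
  rewrite (ind_out _ nVx).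
  case: (pselect (V (r xi))) => Vr; last by rewrite (ind_out _ Vr) !(mulr0, mul0r).
  case: (pselect (V (d xi))) => Vd; last by rewrite (ind_out _ Vd) !(mulr0, mul0r).
  by exfalso; apply: nV.
rewrite (ind_in _ Vr) (ind_in _ Vd) mulr1 mul1r mulr1.
case: (pselect (units g xi)) => ux.
  have Vx : V xi by rewrite -ux.
  rewrite (ind_in _ Vx) ef1 (stein_const_unit G HW' W'un W'u) //; try by apply: VW'.
    have <- : c = \sum_(p <- s) p.1 * \1_(p.2) u by rewrite /c ef1.
    by rewrite mulVf.
have nVx : ~ V xi by move=> /Vun.
rewrite (ind_out _ nVx) ef1 (stein_const_nonunit HW') ?mulr0 //; by apply: VW'.
Qed.

End Main.

Unset Implicit Arguments. Set Strict Implicit.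

Theorem proposition4p7 (T : topologicalType) (g : groupoid_ops T)
  (K : fieldType) (nu : T * T -> K) :
  ample g -> @second_countable T -> units_hausdorff g ->
  normalized_cocycle g nu ->
  effective g ->
  (forall f : T -> K, steinberg g f -> (exists x, f x != 0) ->
     interior [set x | f x != 0] !=set0) ->
  minimal g ->
  simple_algebra g nu.
Proof.
move=> Ha _ Hh Hnu Heff Hint Hmin I HI.
case: (pselect (exists f, I f /\ exists x, f x != 0)) => [[f [If fnz]]|nf].
  right; apply/seteqP; split; first by case: HI.
  have [W0 [JW0 oW0 W00]] := stepA Ha Heff Hh Hnu HI Hint If fnz.
  move=> h [s [Hs ->]].
  elim: s Hs => [|p s IH] Hs.
    suff -> : (fun x : T => \sum_(p <- [::]) p.1 * \1_(p.2) x) = (fun _ => 0 : K).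
      exact: (I0 HI).
    by apply: funext => x; rewrite big_nil.
  have Ip := Jfinal Ha Heff Hnu Hmin HI JW0 oW0 W00 p.1 (Hs p (mem_head p s)).
  have Is := IH (fun q qs => Hs q (introT orP (or_intror qs))).
  have := Isub HI Ip (Isub HI (I0 HI) Is).
  suff -> : (fun x : T => p.1 * \1_(p.2) x - (0 - \sum_(q <- s) q.1 * \1_(q.2) x)) =
    (fun x => \sum_(q <- p :: s) q.1 * \1_(q.2) x) by [].
  by apply: funext => x; rewrite big_cons sub0r opprK.
left; apply/seteqP; split.
  move=> f If; apply: funext => x; apply: contrapT => fx.
  by apply: nf; exists f; split => //; exists x; apply/eqP.
by move=> _ ->; exact: (I0 HI).
Qed.
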